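(* Let $G=(V,E,T,c)$ be a $k$-terminal network and let $S\subset T$ with $S\neq\emptyset,T$. Then there exists a component $C\in CC(E_S)$ that is elementary, i.e. $\delta(C)=E_{C\cap T}$ and $|CC(\delta(C))|=2$.
   Context: A $k$-terminal network $G=(V,E,T,c)$ is a finite connected undirected graph $(V,E)$ with edge weights (capacities) $c:E\to\mathbb{R}_{>0}$ and a set $T\subseteq V$ of $|T|=k$ terminals. For $F\subseteq E$ let $c(F)=\sum_{e\in F}c(e)$; for $W\subseteq V$ let $\delta(W)$ be the set of edges with exactly one endpoint in $W$. For $S\subset T$ with $S\neq\emptyset,T$, write $\bar S=T\setminus S$; a cut $(W,V\setminus W)$ is $S$-separating if $W\cap T\in\{S,\bar S\}$, and $\mathrm{mincut}_G(S)$ is the minimum of $c(\delta(W))$ over all $S$-separating cuts. It is assumed (e.g. by a generic perturbation of the weights) that the minimizing cutset is unique; it is denoted $E_S$ (so $E_S=E_{\bar S}$). For $F\subseteq E$, $CC(F)$ denotes the set of vertex sets of connected components of $(V,E\setminus F)$. *)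

(* Defs.v *)
From HB Require Import structures.
From mathcomp Require Import all_boot all_order all_algebra.
Set Implicit Arguments. Unset Strict Implicit. Unset Printing Implicit Defensive.
Import Order.TTheory GRing.Theory Num.Theory.

(* A network: vertex type V, edge type E, each edge e joins the endpoints
   eu e and ev e (undirected). *)
Section Network.
Variables (V E : finType) (R : realFieldType).
Variables (eu ev : E -> V) (c : E -> R).

Definition delta (W : {set V}) : {set E} :=
  [set e | (eu e \in W) != (ev e \in W)].

Definition cost (F : {set E}) : R := (\sum_(e in F) c e)%R.

Definition adj_wo (F : {set E}) : rel V :=
  fun x y => [exists e, (e \notin F) &&
     (((eu e == x) && (ev e == y)) || ((eu e == y) && (ev e == x)))].

Definition CC (F : {set E}) : {set {set V}} :=
  [set [set y | connect (adj_wo F) x y] | x : V].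

Definition connected_graph : Prop :=
  forall x y : V, connect (adj_wo set0) x y.

Definition separating (T S W : {set V}) : bool :=
  (W :&: T == S) || (W :&: T == T :\: S).

Definition is_min_cut (T S : {set V}) (F : {set E}) : Prop :=
  [/\ S != set0, S \proper T,
      (exists2 W, separating T S W & F = delta W) &
      (forall W, separating T S W -> (cost F <= cost (delta W))%R)].

End Network.

(* Main.v *)
Require Import Defs.
From HB Require Import structures.
From mathcomp Require Import all_boot all_order all_algebra.
From mathcomp Require Import lra.
Import Order.TTheory GRing.Theory Num.Theory.
Set Implicit Arguments. Unset Strict Implicit.

Section Aux.
Variables (V E : finType) (R : realFieldType).
Variables (eu ev : E -> V) (c : E -> R).
Hypothesis Hpos : forall e, (0 < c e)%R.

Local Notation delta := (delta eu ev).
Local Notation adj := (adj_wo eu ev).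

Lemma adj_sym (F : {set E}) : symmetric (adj F).
Proof.
by move=> x y; apply/existsP/existsP => -[e /andP[he h]]; exists e; rewrite he /= orbC.
Qed.

Lemma conn_sym (F : {set E}) : connect_sym (adj F).
Proof. exact: sym_connect_sym (@adj_sym F). Qed.

Lemma adj_edge (F : {set E}) e : e \notin F -> adj F (eu e) (ev e).
Proof. by move=> he; apply/existsP; exists e; rewrite he !eqxx. Qed.

Lemma crossing (F : {set E}) (K : {set V}) x y : connect (adj F) x y -> x \in K -> y \notin K ->
  exists2 e, e \notin F & e \in delta K.
Proof.
move/connectP => [p pth ->]; elim: p x pth => [|z p IH] x /=.
  by move=> _ ->.
case/andP=> hxz pth hx hy; case: (boolP (z \in K)) => hz; first exact: IH pth hz hy.
case/existsP: hxz => e /andP[heF /orP[/andP[/eqP h1 /eqP h2]|/andP[/eqP h1 /eqP h2]]];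
  by exists e => //; rewrite inE h1 h2 hx (negbTE hz).
Qed.

Lemma deltaC (K : {set V}) : delta (~: K) = delta K.
Proof. by apply/setP => e; rewrite !inE; case: (eu e \in K); case: (ev e \in K). Qed.

Lemma side (K : {set V}) x y : connect (adj (delta K)) x y -> (x \in K) = (y \in K).
Proof.
move=> h; case: (boolP (x \in K)) => hx; case: (boolP (y \in K)) => hy //.
  by case: (crossing h hx hy) => e /negP.
rewrite conn_sym in h.
by case: (crossing h hy hx) => e /negP.
Qed.

Lemma connect_sub_in (r r' : rel V) (P : pred V) a b :
  (forall u v, P u -> r u v -> P v && r' u v) -> P a -> connect r a b -> connect r' a b.
Proof.
move=> H Pa /connectP[p pth ->]; elim: p a Pa pth => [|z p IH] a Pa /=.
  by rewrite connect0.
case/andP=> raz pth; case/andP: (H _ _ Pa raz) => Pz r'az.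
by apply: connect_trans (connect1 r'az) _; exact: IH.
Qed.

Definition cls (F : {set E}) x := [set y | connect (adj F) x y].

Lemma cls_closed (F : {set E}) x u v : u \in cls F x -> adj F u v -> v \in cls F x.
Proof. by rewrite !inE => h1 h2; apply: connect_trans h1 (connect1 h2). Qed.

Lemma costE (A : {set V}) :
  (cost c (delta A) = \sum_e (if (eu e \in A) != (ev e \in A) then c e else 0))%R.
Proof. by rewrite /cost big_mkcond; apply: eq_bigr => e _; rewrite inE. Qed.

Lemma cost_pos (F : {set E}) e0 : e0 \in F -> (0 < cost c F)%R.
Proof.
move=> he; rewrite /cost (bigD1 e0) //=; apply: (lt_le_trans (Hpos e0)).
by rewrite lerDl; apply: sumr_ge0 => i _; exact: ltW.
Qed.

Lemma cost_split (W K : {set V}) : K \subset W ->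
  (forall u v, u \in K -> adj (delta W) u v -> v \in K) ->
  cost c (delta W) = (cost c (delta K) + cost c (delta (W :\: K)))%R.
Proof.
move=> sKW hcl.
have hk e : (eu e \in W) = (ev e \in W) -> (eu e \in K) = (ev e \in K).
  move=> h; have he : e \notin delta W by rewrite inE h eqxx.
  apply/idP/idP => hh; first exact: hcl hh (adj_edge he).
  by apply: hcl hh _; rewrite adj_sym; exact: adj_edge he.
rewrite !costE -big_split; apply: eq_bigr => e _ /=.
move: (hk e) (subsetP sKW (eu e)) (subsetP sKW (ev e)); rewrite !inE.
case: (eu e \in K); case: (ev e \in K); case: (eu e \in W); case: (ev e \in W) => //= h1 h2 h3;
  rewrite ?addr0 ?add0r //.
all: first [by have := h3 isT | by have := h2 isT | by have := h1 erefl].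
Qed.


Lemma cost_ge0 (F : {set E}) : (0 <= cost c F)%R.
Proof. by apply: sumr_ge0 => i _; exact: ltW. Qed.

Lemma submod (X D : {set V}) :
  (cost c (delta (X :|: D)) + cost c (delta (X :&: D)) <=
   cost c (delta X) + cost c (delta D))%R.
Proof.
rewrite !costE -!big_split; apply: ler_sum => e _ /=; rewrite !inE.
move: (Hpos e) => h.
case: (eu e \in X); case: (ev e \in X); case: (eu e \in D); case: (ev e \in D) => /=; lra.
Qed.

Lemma sep_compl (T S W : {set V}) : S \subset T -> separating T S W ->
  separating T S (~: W).
Proof.
move=> sST /orP[/eqP h|/eqP h]; rewrite /separating; apply/orP; [right|left];
  apply/eqP/setP => v; move/setP: h => /(_ v); move/subsetP: sST => /(_ v);
  rewrite !inE; case: (v \in W); case: (v \in T); case: (v \in S) => //=;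
  by move/(_ isT).
Qed.

Lemma cls_adj (F : {set E}) w : subrel (adj F) (adj (delta (cls F w))).
Proof.
move=> u v /existsP[e /andP[heF hor]]; apply/existsP; exists e; rewrite hor andbT.
have h : (eu e \in cls F w) = (ev e \in cls F w).
  apply/idP/idP => hh; first exact: cls_closed hh (adj_edge heF).
  by apply: cls_closed hh _; rewrite adj_sym; exact: adj_edge heF.
by rewrite inE h eqxx.
Qed.

Lemma delta_ends (K : {set V}) e : e \in delta K -> exists u, exists v,
  [/\ u \in K, v \notin K, (forall X, (e \in delta X) = ((u \in X) != (v \in X)))
    & (forall F : {set E}, e \notin F -> adj F u v)].
Proof.
rewrite inE; case: (boolP (eu e \in K)) => hu /=.
  move=> hv; exists (eu e), (ev e); split.
  - by [].
  - by move: hv; case: (ev e \in K).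
  - by move=> X; rewrite inE.
  - by move=> F; exact: adj_edge.
move=> hv; exists (ev e), (eu e); split.
- by move: hv; case: (ev e \in K).
- by [].
- by move=> X; rewrite inE eq_sym.
- by move=> F hF; rewrite adj_sym; exact: adj_edge.
Qed.

End Aux.

Theorem lemma2p4 (V E : finType) (R : realFieldType)
  (eu ev : E -> V) (c : E -> R) (T S : {set V})
  (* undirected simple graph: no loops, no parallel edges *)
  (Hloop : forall e, eu e != ev e)
  (Hsimple : forall e f, [set eu e; ev e] = [set eu f; ev f] -> e = f)
  (Hconn : connected_graph eu ev)
  (Hpos : forall e, (0 < c e)%R)
  (* uniqueness of minimum cutsets (generic weights) *)
  (Huniq : forall S' F1 F2, is_min_cut eu ev c T S' F1 ->
                            is_min_cut eu ev c T S' F2 -> F1 = F2)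
  (HS0 : S != set0) (HST : S \proper T)
  (ES : {set E}) (HES : is_min_cut eu ev c T S ES) :
  exists2 C : {set V}, C \in CC eu ev ES &
    is_min_cut eu ev c T (C :&: T) (delta eu ev C) /\
    #|CC eu ev (delta eu ev C)| = 2.
Proof.
have sST : S \subset T by case/andP: HST.
case: HES => _ _ [W sepW defES] minES.
have sideW x : exists2 W0, separating T S W0 & (delta eu ev W0 = ES /\ x \in W0).
  case: (boolP (x \in W)) => hx; first by exists W.
  by exists (~: W); [exact: sep_compl | rewrite deltaC defES inE].
have clsW W0 x y : delta eu ev W0 = ES -> connect (adj_wo eu ev ES) x y ->
    (x \in W0) = (y \in W0).
  by move=> <-; exact: side.
have csym := conn_sym eu ev.
have termA x : exists2 t, t \in T & t \in cls eu ev ES x.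
  case: (boolP [exists t, (t \in T) && (t \in cls eu ev ES x)]).
    by case/existsP => t /andP[]; exists t.
  move/existsPn => hK; exfalso.
  set K := cls eu ev ES x.
  have [W0 sep0 [d0 x0]] := sideW x.
  have sKW : K \subset W0.
    by apply/subsetP => y; rewrite inE => h; rewrite -(clsW W0 x y d0 h).
  have hcl u v : u \in K -> adj_wo eu ev (delta eu ev W0) u v -> v \in K.
    by rewrite d0; exact: cls_closed.
  have := cost_split c sKW hcl.
  have sep1 : separating T S (W0 :\: K).
    rewrite /separating.
    have -> : (W0 :\: K) :&: T = W0 :&: T.
      apply/setP => v; rewrite !in_setI in_setD; case: (boolP (v \in T)) => hv;
        rewrite ?andbF ?andbT //.
      by have := hK v; rewrite hv /= => /negbTE ->.
    exact: sep0.
  have := minES _ sep1.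
  have [t tS] := set0Pn _ HS0.
  have tT : t \in T by exact: (subsetP sST t tS).
  have tK : t \notin K by have := hK t; rewrite tT.
  have xK : x \in K by rewrite inE connect0.
  have [e _ he] := crossing (Hconn x t) xK tK.
  have := cost_pos Hpos he.
  rewrite d0 => h1 h2 h3; rewrite h3 gerDr in h2.
  by have := lt_le_trans h1 h2; rewrite ltxx.
have [t tS] := set0Pn _ HS0.
have tT : t \in T by exact: (subsetP sST t tS).
have [_ [t' t'T t'S]] := properP HST.
have p0P : t' \notin cls eu ev ES t.
  rewrite inE; apply/negP => h.
  have [W0 sep0 [d0 x0]] := sideW t.
  have := clsW W0 _ _ d0 h; rewrite x0 => /esym t'W.
  case/orP: sep0 => /eqP/setP h0.
    by have := h0 t'; rewrite !inE t'W t'T (negbTE t'S).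
  by have := h0 t; rewrite !inE x0 tT tS.
pose Kf (p : V * V) := cls eu ev (delta eu ev (cls eu ev ES p.1)) p.2.
pose P (p : V * V) := p.2 \notin cls eu ev ES p.1.
case: (@arg_maxnP _ (t, t') P (fun p => #|Kf p|) p0P) => [[x y]] /= Pxy maxp.
set C := cls eu ev ES x.
have xC : x \in C by rewrite inE connect0.
have CK z : z \in Kf (x, y) -> z \notin C.
  by rewrite inE => /side e; rewrite -e.
have sub w0 : subrel (connect (adj_wo eu ev ES))
    (connect (adj_wo eu ev (delta eu ev (cls eu ev ES w0)))).
  by apply: connect_sub => u v h; apply: connect1; exact: cls_adj h.
have KC : Kf (x, y) = ~: C.
  apply/setP => z; rewrite [in RHS]inE; apply/idP/idP; first exact: CK.
  move=> zC; case: (boolP (z \in Kf (x, y))) => // zK; exfalso.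
  set C' := cls eu ev ES z.
  have disj w : w \in C -> w \notin C'.
    rewrite !inE => h1; apply/negP => h2; move/negP: zC; apply.
    by rewrite inE; apply: connect_trans h1 _; rewrite csym.
  have disjK w : w \in Kf (x, y) -> w \notin C'.
    rewrite !inE => h1; apply/negP => h2; move/negP: zK; apply.
    rewrite inE; apply: connect_trans h1 _; rewrite csym.
    exact: sub h2.
  have yK : y \in Kf (x, y) by rewrite inE connect0.
  have xK : x \notin Kf (x, y) by apply/negP => /CK; rewrite xC.
  have big : (#|Kf (x, y)| < #|Kf (z, x)|)%N.
    apply: proper_card; apply/properP; split; last first.
      by exists x; [rewrite inE connect0 | exact: xK].
    apply/subsetP => w wK.
    have [e _ he] := crossing (Hconn y x) yK xK.
    have [u2 [v2 [u2K v2K hX hadj]]] := delta_ends he.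
    have eC : e \in delta eu ev C.
      apply/negPn/negP => heC; move/negP: v2K; apply.
      exact: cls_closed u2K (hadj _ heC).
    have v2C : v2 \in C.
      by rewrite hX in eC; move: eC (CK _ u2K); case: (u2 \in C); case: (v2 \in C).
    rewrite inE.
    apply: (@connect_trans _ _ v2).
      by apply: (sub z); move: v2C; rewrite inE.
    apply: (@connect_trans _ _ u2).
      apply: connect1; rewrite adj_sym; apply: hadj.
      by rewrite hX (negbTE (disjK _ u2K)) (negbTE (disj _ v2C)).
    have hu2w : connect (adj_wo eu ev (delta eu ev C)) u2 w.
      by move: (u2K) wK; rewrite !inE => h1 h2; rewrite csym in h1; exact: connect_trans h1 h2.
    apply: (connect_sub_in (P := mem (Kf (x, y))) _ u2K hu2w).
    move=> a b aK hab; have bK := cls_closed aK hab; apply/andP; split; first exact: bK.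
    case/existsP: hab => e' /andP[he' hor]; apply/existsP; exists e'; rewrite hor andbT.
    rewrite inE; case/orP: hor => /andP[/eqP-> /eqP->];
      by rewrite (negbTE (disjK _ aK)) (negbTE (disjK _ bK)).
  have := maxp (z, x) (disj x xC).
  by rewrite /= leqNgt big.
have clsC w : w \in C -> cls eu ev (delta eu ev C) w = C.
  move=> wC; apply/setP => v; rewrite [in LHS]inE; apply/idP/idP.
    by move/side => <-.
  move=> vC; apply: (sub x); move: wC vC; rewrite !inE => h1 h2.
  by rewrite csym in h1; exact: connect_trans h1 h2.
have clsK w : w \notin C -> cls eu ev (delta eu ev C) w = ~: C.
  move=> wC; rewrite -KC; have : w \in Kf (x, y) by rewrite KC inE.
  rewrite inE => hyw; apply/setP => v; rewrite !inE; apply/idP/idP => h.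
    exact: connect_trans hyw h.
  by rewrite csym in hyw; exact: connect_trans hyw h.
have CCeq : CC eu ev (delta eu ev C) = [set C; ~: C].
  apply/setP => X; apply/imsetP/set2P.
    case=> w _ ->; case: (boolP (w \in C)) => hw.
      by left; exact: clsC.
    by right; exact: clsK.
  case=> ->.
    by exists x => //; exact/esym/clsC.
  by exists y => //; exact/esym/clsK.
have CneqC : C != ~: C.
  apply/negP => /eqP h; have : x \in ~: C by rewrite -h.
  by rewrite inE xC.
exists C; first by apply/imsetP; exists x.
split; last by rewrite CCeq cards2 CneqC.
have [t0 t0T t0C] := termA x.
have [t1 t1T t1y] := termA y.
have t1C : t1 \notin C.
  apply/negP => h; move/negP: Pxy; apply; move: h t1y; rewrite !inE => h1 h2.
  by rewrite csym in h2; exact: connect_trans h1 h2.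
have hkey X' : X' :&: T = C :&: T ->
    (cost c (delta eu ev C) <= cost c (delta eu ev X'))%R.
  move=> hX.
  have [W0 sep0 [d0 x0]] := sideW x.
  have sCW : C \subset W0.
    by apply/subsetP => v; rewrite inE => h; rewrite -(clsW W0 x v d0 h).
  have hcl u v : u \in C -> adj_wo eu ev (delta eu ev W0) u v -> v \in C.
    by rewrite d0; exact: cls_closed.
  have hsplit := cost_split c sCW hcl.
  set D := W0 :\: C.
  have sepXD : separating T S (X' :|: D).
    rewrite /separating.
    have -> : (X' :|: D) :&: T = W0 :&: T.
      apply/setP => v; move/setP: hX => /(_ v); move/subsetP: sCW => /(_ v).
      rewrite !(in_setI, in_setU, in_setD).
      case: (v \in X'); case: (v \in T); case: (v \in C); case: (v \in W0) => //=;
        by move/(_ isT).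
    exact: sep0.
  have h1 := minES _ sepXD.
  have h2 := submod eu ev Hpos X' D.
  have h3 := cost_ge0 Hpos (delta eu ev (X' :&: D)).
  rewrite -d0 hsplit in h1.
  have h4 : (cost c (delta eu ev (X' :|: D)) <=
             cost c (delta eu ev X') + cost c (delta eu ev D))%R.
    by apply: le_trans h2; rewrite lerDl.
  by have := le_trans h1 h4; rewrite lerD2r.
split.
- by apply/set0Pn; exists t0; rewrite in_setI t0C t0T.
- apply/properP; split; first exact: subsetIr.
  by exists t1 => //; rewrite in_setI (negbTE t1C).
- by exists C => //; rewrite /separating eqxx.
- move=> X /orP[/eqP h|/eqP h]; first exact: (hkey X h).
  rewrite -[delta eu ev X]deltaC; apply: hkey.
  apply/setP => v; move/setP: h => /(_ v).
  rewrite !(in_setI, in_setD, in_setC).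
  by case: (v \in X); case: (v \in T); case: (v \in C).
Qed.
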